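(* With notation as in the context, there exist cellular 2-cocycles $\psi_0\in C^2(Z_0;\mathbf{Z})$ and $\psi_1\in C^2(Z_1;\mathbf{Z})$, each invariant under translations by the lattice $\Gamma=(2\mathbf{Z})^4\oplus\langle u\rangle$, such that $\langle\psi_i,[J]\rangle=\pm1$ for every jailcell $J\subset Z_i$ ($i=0,1$), and $\psi_1(\tau(c))=\psi_0(c)$ for every 2-cell $c$ of $Z_0$.
   Context: Give $\mathbf{R}^5$ the product cubical cell structure with integer vertices; $Z_0$ is its 2-skeleton (a cubical 2-complex whose 2-cells are unit squares), $u=e_1+\dots+e_5$, $\tau:\mathbf{R}^5\to\mathbf{R}^5$ is the translation $\tau(x)=x+u/2$, and $Z_1=\tau(Z_0)$ with the translated cell structure. A jailcell in $Z_0$ (resp. $Z_1$) is the boundary of a unit 3-cube of the cubical structure of $\mathbf{R}^5$ (resp. of its translate by $u/2$), regarded as an oriented cellular 2-cycle in $Z_0$ (resp. $Z_1$). *)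

(* Defs.v *)
From mathcomp Require Import all_boot all_order all_algebra.
Set Implicit Arguments. Unset Strict Implicit. Unset Printing Implicit Defensive.
Import Order.TTheory GRing.Theory Num.Theory.
Local Open Scope ring_scope.

(* Points of R^5 (all vertices involved are rational). *)
Definition point := 'I_5 -> rat.

Definition padd (x y : point) : point := fun k => x k + y k.
Definition evec (i : 'I_5) : point := fun k => (k == i)%:R.
(* u/2, where u = e_1 + ... + e_5 *)
Definition uhalf : point := fun _ => 1 / 2.

(* A (candidate) unit square  base + [0,1] e_d1 + [0,1] e_d2 , carrying the
   orientation e_d1 /\ e_d2 (a genuine square requires d1 < d2). *)
Record cell2 := Cell2 { base : point; dir1 : 'I_5; dir2 : 'I_5 }.

Definition is_intpt (x : point) := forall k, exists z : int, x k = z%:~R.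
Definition is_halfpt (x : point) := forall k, exists z : int, x k = z%:~R + 1 / 2.

(* 2-cells of Z_0 (integer base vertex) and of Z_1 = tau(Z_0). *)
Definition cell_Z0 (c : cell2) := (dir1 c < dir2 c)%N /\ is_intpt (base c).
Definition cell_Z1 (c : cell2) := (dir1 c < dir2 c)%N /\ is_halfpt (base c).

Definition shift (g : point) (c : cell2) : cell2 :=
  Cell2 (padd (base c) g) (dir1 c) (dir2 c).
Definition tau (c : cell2) : cell2 := shift uhalf c.

(* Integer 2-cochains: value on each 2-cell with its standard orientation.
   (Only values on cells of Z_i matter.)  Since Z_i is a 2-complex,
   C^3(Z_i) = 0 and every 2-cochain is a cocycle. *)
Definition cochain2 := cell2 -> int.

(* The lattice Gamma = (2Z)^4 (+) <u>, spanned by 2e_1,...,2e_4 and u. *)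
Definition in_Gamma (g : point) :=
  exists (a : 'I_5 -> int) (m : int),
    a ord_max = 0 /\ forall k, g k = (2 * a k + m)%:~R.

Definition Gamma_invariant (cellP : cell2 -> Prop) (psi : cochain2) :=
  forall g, in_Gamma g -> forall c, cellP c -> psi (shift g c) = psi c.

(* Evaluation of psi on the jailcell = oriented boundary of the unit 3-cube
   v + [0,1]e_i + [0,1]e_j + [0,1]e_k  (i < j < k):
   d(e_i e_j e_k) = (F_i^1 - F_i^0) - (F_j^1 - F_j^0) + (F_k^1 - F_k^0). *)
Definition jail_eval (psi : cochain2) (v : point) (i j k : 'I_5) : int :=
    (psi (Cell2 (padd v (evec i)) j k) - psi (Cell2 v j k))
  - (psi (Cell2 (padd v (evec j)) i k) - psi (Cell2 v i k))
  + (psi (Cell2 (padd v (evec k)) i j) - psi (Cell2 v i j)).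

(* Main.v *)
Require Import Defs.
From mathcomp Require Import all_boot all_order all_algebra.
From mathcomp Require Import zify ring lra.
Import Order.TTheory GRing.Theory Num.Theory.
Local Open Scope ring_scope.

Definition par (x : rat) : int := ((numq x) %% 2)%Z.

Lemma par_int (z : int) : par z%:~R = (z %% 2)%Z.
Proof. by rewrite /par numq_int. Qed.

Lemma par_step (z : int) : par (z + 1)%:~R - par z%:~R = 1 \/ par (z + 1)%:~R - par z%:~R = -1.
Proof.
rewrite !par_int -modzDml.
have h0 := @modz_ge0 z 2 isT. have h1 := @ltz_pmod z 2 isT.
have [->|->] : (z %% 2)%Z = 0 \/ (z %% 2)%Z = 1 by lia.
  by left. by right.
Qed.

Definition mmn (j k : nat) : nat :=
  (match (k - j)%N with 1 => j + 2 | 2 => j + 3 | 3 => k + 3 | _ => k + 2 end)%N.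
Definition mm (j k : 'I_5) : 'I_5 := Ordinal (ltn_pmod (mmn j k) (isT : (0 < 5)%N)).

Lemma triple_nat : all (fun i => all (fun j => all (fun k =>
  ((i < j)%N && (j < k)%N) ==> ((mmn j k %% 5 == i) + (mmn i k %% 5 == j) + (mmn i j %% 5 == k) == 1)%N)
  (iota 0 5)) (iota 0 5)) (iota 0 5).
Proof. by []. Qed.

Lemma triple (i j k : 'I_5) : (i < j)%N -> (j < k)%N ->
  ((mm j k == i) + (mm i k == j) + (mm i j == k) = 1)%N.
Proof.
move=> hij hjk.
have := triple_nat; move/allP/(_ i); rewrite mem_iota ltn_ord => /(_ isT).
move/allP/(_ j); rewrite mem_iota ltn_ord => /(_ isT).
move/allP/(_ k); rewrite mem_iota ltn_ord => /(_ isT).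
by rewrite hij hjk /= => /eqP.
Qed.

Definition psi (c : cell2) : int :=
  par (base c (mm (dir1 c) (dir2 c)) - base c (dir1 c)).

Definition intdiff (v : point) := forall a b, exists z : int, v a - v b = z%:~R.

Definition fd (v : point) (i j m : 'I_5) :=
  par (padd v (evec i) m - padd v (evec i) j) - par (v m - v j).

Lemma fd_val v i j m : intdiff v -> j != i ->
  (m != i -> fd v i j m = 0) /\ (m == i -> fd v i j m = 1 \/ fd v i j m = -1).
Proof.
move=> hv hji; have [z hz] := hv m j.
rewrite /fd /padd /evec (negbTE hji) addr0.
split.
  by move/negbTE => ->; rewrite addr0 subrr.
move/eqP => Hm; subst m; rewrite eqxx.
have -> : v i + 1%:R - v j = (z + 1)%:~R by rewrite intrD -hz /=; ring.
by rewrite hz; apply: par_step.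
Qed.

Lemma intpt_diff v : is_intpt v -> intdiff v.
Proof.
move=> h a b; have [za ->] := h a; have [zb ->] := h b.
by exists (za - zb); rewrite intrB.
Qed.

Lemma halfpt_diff v : is_halfpt v -> intdiff v.
Proof.
move=> h a b; have [za ->] := h a; have [zb ->] := h b.
by exists (za - zb); rewrite intrB; ring.
Qed.

Lemma jail_fd v (i j k : 'I_5) : jail_eval psi v i j k =
  fd v i j (mm j k) - fd v j i (mm i k) + fd v k i (mm i j).
Proof. by []. Qed.

Lemma jail_pm v (i j k : 'I_5) : intdiff v -> (i < j)%N -> (j < k)%N ->
  jail_eval psi v i j k = 1 \/ jail_eval psi v i j k = -1.
Proof.
move=> hv hij hjk; rewrite jail_fd.
have hji : j != i by rewrite neq_ltn hij orbT.
have hik : i != k by rewrite neq_ltn (ltn_trans hij hjk).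
have hij' : i != j by rewrite neq_ltn hij.
have [A1 B1] := fd_val _ _ _ (mm j k) hv hji.
have [A2 B2] := fd_val _ _ _ (mm i k) hv hij'.
have [A3 B3] := fd_val v k i (mm i j) hv hik.
have := triple i j k hij hjk.
case: (mm j k =P i) => [/eqP e1|/eqP e1]; case: (mm i k =P j) => [/eqP e2|/eqP e2];
  case: (mm i j =P k) => [/eqP e3|/eqP e3] //= _.
- rewrite (A2 e2) (A3 e3); case: (B1 e1) => ->; [left|right]; ring.
- rewrite (A1 e1) (A3 e3); case: (B2 e2) => ->; [right|left]; ring.
- rewrite (A1 e1) (A2 e2); case: (B3 e3) => ->; [left|right]; ring.
Qed.

Lemma psi_inv (cellP : cell2 -> Prop) : (forall c, cellP c -> intdiff (base c)) ->
  Gamma_invariant cellP psi.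
Proof.
move=> hP g [a [n [_ hg]]] c /hP hc.
rewrite /psi /shift /padd /=.
set m := mm (dir1 c) (dir2 c); set j := dir1 c.
have [z hz] := hc m j.
have -> : base c m + g m - (base c j + g j) = ((a m - a j) * 2 + z)%:~R.
  rewrite !hg !intrD !intrM !intrB -hz; ring.
by rewrite hz !par_int modzMDl.
Qed.

Theorem propositionA5 :
  exists psi0 psi1 : cochain2,
    Gamma_invariant cell_Z0 psi0 /\ Gamma_invariant cell_Z1 psi1 /\
    (forall (v : point) (i j k : 'I_5), is_intpt v ->
       (i < j)%N -> (j < k)%N ->
       jail_eval psi0 v i j k = 1 \/ jail_eval psi0 v i j k = -1) /\
    (forall (v : point) (i j k : 'I_5), is_halfpt v ->
       (i < j)%N -> (j < k)%N ->
       jail_eval psi1 v i j k = 1 \/ jail_eval psi1 v i j k = -1) /\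
    (forall c : cell2, cell_Z0 c -> psi1 (tau c) = psi0 c).
Proof.
exists psi, psi; split; [|split; [|split; [|split]]].
- by apply: psi_inv => c [_ /intpt_diff].
- by apply: psi_inv => c [_ /halfpt_diff].
- by move=> v i j k /intpt_diff; apply: jail_pm.
- by move=> v i j k /halfpt_diff; apply: jail_pm.
- move=> c _; rewrite /psi /tau /shift /padd /=; congr (par _); rewrite opprD addrACA subrr addr0 //.
Qed.
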